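(* Under the recursive network formation model with the utility function described in the context, the following hold. 1. If $c>b_1$ (for any $c_0$), no node ever enters. The resulting single-node network (which is both a star and a null graph) is efficient. 2. If the conditions $b_1-b_2+\gamma b_2\le c<b_1$ and $c_0<(1-\gamma)(b_2-b_3)$ hold, then the star network formed is efficient, for every number of nodes. 3. If the conditions $c<b_1-b_2$ and $c_0\le(1-\gamma)b_2$ hold, then the complete network formed is efficient, for every number of nodes.
   Context: Networks are finite simple undirected graphs whose vertices (nodes) are self-interested agents. Parameters: benefits $b_1>b_2>b_3>\dots>0$, where $b_i$ is the benefit a node obtains from a node at distance $i$; a link cost $c$ per immediate neighbor; an intermediation fraction $\gamma$ with $0\le\gamma<1$; and a network entry factor $c_0$. Notation: $N$ is the set of nodes currently in the network, $d_j$ the degree of $j$, and $l(j,w)$ the graph distance. A node $x$ is essential for a pair $y,z$ (with $x\notin\{y,z\}$) if $x$ lies on every path joining $y$ and $z$. Write $E(y,z)$ for the set of nodes essential for $y,z$ and $e(y,z)=|E(y,z)|$. Only pairs joined by a path contribute to the sums below. Utility of node $j$ in network $g$: $$u_j(g)=-c_0\,d_{T(j)}\mathbf 1_{\{j=\mathrm{NE}\}}+d_j(b_1-c)+\sum_{w\in N,\ l(j,w)>1}b_{l(j,w)}-\sum_{w\in N,\ E(j,w)\ne\emptyset}\gamma\, b_{l(j,w)}+\sum_{y,z\in N,\ j\in E(y,z)}\frac{\gamma}{e(y,z)}\,2\,b_{l(y,z)}.$$ Here $\mathbf 1_{\{j=\mathrm{NE}\}}=1$ exactly when $j$ is a newly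 entering node evaluating the creation of its first link. $T(j)$ is the existing node to which $j$ forms that first link, and $d_{T(j)}$ is that node's degree before the link. The network before entry gives the entering node utility $0$. Pairwise stability: $g$ is pairwise stable if (a) for every link $(i,j)\in g$, $u_i(g\setminus\{(i,j)\})\le u_i(g)$ and $u_j(g\setminus\{(i,j)\})\le u_j(g)$; and (b) for every non-link $(i,j)\notin g$, if $u_i(g\cup\{(i,j)\})>u_i(g)$ then $u_j(g\cup\{(i,j)\})<u_j(g)$. Recursive model of network formation: - The process starts with a single node. - When the current network of $n-1$ nodes is pairwise stable, a new node considers entering. Its options are to stay out or to propose a link to one existing node. The link forms iff the receiving node's utility does not decrease. No existing node can link to the newcomer before it has formed this first link. - After entry, nodes are repeatedly chosen at random to move. A chosen node plays a myopic best response among three options: create a link with a non-neighbor (the link forms only if the other node's utility does not decrease, which the proposer anticipates); delete a link with a neighbor (unilaterally); or keep the status quo. It alters a link only if this strictly increases its current utility. - This continues until the network is pairwise stable; then the next node considers entering, and so on. Efficiency: since intermediation rents are transfers and each node pays the entry fee at most once, the welfare of a network $g$ on node set $N$ is $$W(g)=\sum_{j\in N}\Big(d_j(b_1-c)+\sum_{w\in N,\ l(j,w)>1}b_{l(j,w)}\Big).$$ The network $g$ is efficient if $W(g)\ge W(g')$ for every network $g'$ on the same node set $N$. *)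

(* Defs.v *)
(* Networks on node set 'I_n are simple graphs given by a
   symmetric irreflexive boolean relation on 'I_n. *)
From HB Require Import structures.
From mathcomp Require Import all_boot all_order all_algebra.
Set Implicit Arguments. Unset Strict Implicit. Unset Printing Implicit Defensive.
Import Order.TTheory GRing.Theory Num.Theory.

Section Model.
Variable R : realFieldType.

Local Open Scope ring_scope.

Definition simple n (g : rel 'I_n) : Prop :=
  (forall u v, g u v = g v u) /\ (forall u, g u u = false).

Definition deg n (g : rel 'I_n) (j : 'I_n) : nat := #|[pred v | g j v]|.

Definition walk_k n (g : rel 'I_n) (y z : 'I_n) (k : nat) : bool :=
  [exists p : k.-tuple 'I_n, path g y p && (last y p == z)].

(* graph distance l(y,z): least number of edges of a walk (= path) from y to z;
   only used for pairs joined by a path (for which it is < n) *)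
Definition dist n (g : rel 'I_n) (y z : 'I_n) : nat :=
  find (walk_k g y z) (iota 0 n).

(* x is essential for y,z: x \notin {y,z}, y and z are joined by a path,
   and every path joining y and z contains x (no path avoids x) *)
Definition avoid n (g : rel 'I_n) (x : 'I_n) : rel 'I_n :=
  fun u v => [&& g u v, u != x & v != x].

Definition essential n (g : rel 'I_n) (x y z : 'I_n) : bool :=
  [&& x != y, x != z, connect g y z & ~~ connect (avoid g x) y z].

Definition ness n (g : rel 'I_n) (y z : 'I_n) : nat :=
  #|[pred x | essential g x y z]|.

Variables (b : nat -> R) (c gamma c0 : R).

(* utility u_j(g) without the entry term (i.e. for j not a newly entering node).
   The intermediation-income sum is over unordered pairs {y,z} (y < z). *)
Definition util n (g : rel 'I_n) (j : 'I_n) : R :=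
  (deg g j)%:R * (b 1%N - c)
  + \sum_(w : 'I_n | connect g j w && (1 < dist g j w)%N) b (dist g j w)
  - \sum_(w : 'I_n | [exists x, essential g x j w]) gamma * b (dist g j w)
  + \sum_(y : 'I_n) \sum_(z : 'I_n | (y < z)%N && essential g j y z)
        gamma / (ness g y z)%:R * 2%:R * b (dist g y z).

Definition addl n (g : rel 'I_n) (i j : 'I_n) : rel 'I_n :=
  fun u v => [|| g u v, (u == i) && (v == j) | (u == j) && (v == i)].

Definition dell n (g : rel 'I_n) (i j : 'I_n) : rel 'I_n :=
  fun u v => g u v && ~~ (((u == i) && (v == j)) || ((u == j) && (v == i))).

Definition pairwise_stable n (g : rel 'I_n) : Prop :=
  (forall i j, g i j ->
     util (dell g i j) i <= util g i /\ util (dell g i j) j <= util g j) /\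
  (forall i j, i != j -> ~~ g i j ->
     util g i < util (addl g i j) i -> util (addl g i j) j < util g j).

Definition feasible n (g : rel 'I_n) (i : 'I_n) (h : rel 'I_n) : Prop :=
  h = g \/
  (exists j, g i j /\ h = dell g i j) \/
  (exists j, j != i /\ ~~ g i j /\ util g j <= util (addl g i j) j /\ h = addl g i j).

Definition move n (g g' : rel 'I_n) : Prop :=
  exists i, [/\ feasible g i g', util g i < util g' i &
                forall h, feasible g i h -> util h i <= util g' i].

(* network after a newcomer (node n, = ord_max) links to t : 'I_n *)
Definition ext n (g : rel 'I_n) (t : 'I_n) : rel 'I_n.+1 :=
  fun u v =>
    match unlift ord_max u, unlift ord_max v with
    | Some a, Some b => g a b
    | None, Some b => b == t
    | Some a, None => a == t
    | None, None => false
    end.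

Definition entrant_util n (g : rel 'I_n) (t : 'I_n) : R :=
  util (ext g t) ord_max - c0 * (deg g t)%:R.

Definition accepts n (g : rel 'I_n) (t : 'I_n) : Prop :=
  util g t <= util (ext g t) (widen_ord (leqnSn n) t).

Definition entry_choice n (g : rel 'I_n) (t : 'I_n) : Prop :=
  [/\ accepts g t, 0 < entrant_util g t &
      forall t', accepts g t' -> entrant_util g t' <= entrant_util g t].

Inductive visited : forall n, rel 'I_n -> Prop :=
| visited_init : visited (fun _ _ : 'I_1 => false)
| visited_entry n (g : rel 'I_n) t :
    visited g -> pairwise_stable g -> entry_choice g t -> visited (ext g t)
| visited_move n (g g' : rel 'I_n) :
    visited g -> ~ pairwise_stable g -> move g g' -> visited g'.

End Model.

Section Welfare.
Variable R : realFieldType.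
Local Open Scope ring_scope.
Variables (b : nat -> R) (c : R).

Definition welfare n (g : rel 'I_n) : R :=
  \sum_(j : 'I_n) ((deg g j)%:R * (b 1%N - c)
    + \sum_(w : 'I_n | connect g j w && (1 < dist g j w)%N) b (dist g j w)).

Definition efficient n (g : rel 'I_n) : Prop :=
  forall g' : rel 'I_n, simple g' -> welfare g' <= welfare g.
End Welfare.

(* Main.v *)
Require Import Defs.
From HB Require Import structures.
From mathcomp Require Import all_boot all_order all_algebra.
From mathcomp Require Import ring lra zify.
Import Order.TTheory GRing.Theory Num.Theory.
Set Implicit Arguments. Unset Strict Implicit. Unset Printing Implicit Defensive.

Section Graph.
Variable n : nat.
Implicit Types (g h : rel 'I_n) (x y z u v w : 'I_n).

Lemma walk_kP g y z k : reflect (exists s : seq 'I_n, [/\ size s = k, path g y s & last y s = z]) (walk_k g y z k).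
Proof.
apply: (iffP existsP) => [[p /andP[hp /eqP hl]] | [s [hs hp hl]]].
- by exists p; rewrite size_tuple.
- have hs' : size s == k by rewrite hs.
  by exists (Tuple hs'); rewrite /= hp hl eqxx.
Qed.

Lemma walk0 g y z : walk_k g y z 0 = (y == z).
Proof.
apply/walk_kP/eqP => [[s [/size0nil -> _ <-]] // | ->].
by exists [::].
Qed.

Lemma walk1 g y z : walk_k g y z 1 = g y z.
Proof.
apply/walk_kP/idP => [[[|a [|? ?]] [//= _ /andP[h _] <-]] // | h].
by exists [:: z]; rewrite /= h.
Qed.

Lemma walk2 g y z : walk_k g y z 2 = [exists x, g y x && g x z].
Proof.
apply/walk_kP/existsP => [[[|a [|a' [|? ?]]] [//= _ /and3P[h1 h2 _] <-]] | [x /andP[h1 h2]]].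
  by exists a; rewrite h1.
by exists [:: x; z]; rewrite /= h1 h2.
Qed.

Lemma walk_sub g h y z k : (forall u v, g u v -> h u v) -> walk_k g y z k -> walk_k h y z k.
Proof.
move=> sub /walk_kP[s [hs hp hl]]; apply/walk_kP; exists s; split => //.
exact: sub_path hp.
Qed.

Lemma dist_le g y z k : walk_k g y z k -> (dist g y z <= k)%N.
Proof.
rewrite /dist => hw; case: (leqP (find (walk_k g y z) (iota 0 n)) k) => // hlt.
have hk : (k < n)%N.
  by apply: (leq_trans hlt); have := find_size (walk_k g y z) (iota 0 n); rewrite size_iota.
by move: (before_find 0 hlt); rewrite nth_iota // add0n hw.
Qed.

Lemma dist_walk g y z : connect g y z -> walk_k g y z (dist g y z) /\ (dist g y z < n)%N.
Proof.
case/connectP => p hp ->; case: (shortenP hp) => p' hp' hu _.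
have hsz : (size p' < n)%N.
  have := max_card (mem (y :: p')); rewrite card_ord (card_uniqP hu) /=.
  by [].
have hw : walk_k g y (last y p') (size p') by apply/walk_kP; exists p'.
have hh : has (walk_k g y (last y p')) (iota 0 n).
  by apply/hasP; exists (size p'); rewrite // mem_iota.
have hlt : (dist g y (last y p') < n)%N by have := hh; rewrite has_find size_iota.
split=> //; have := nth_find 0 hh; rewrite nth_iota ?add0n //.
Qed.

Lemma dist_ge g y z k : connect g y z -> (forall m, (m < k)%N -> ~~ walk_k g y z m) -> (k <= dist g y z)%N.
Proof.
move=> hc hk; case: (dist_walk hc) => hw _; rewrite leqNgt; apply/negP => hlt.
by move: (hk _ hlt); rewrite hw.
Qed.

Lemma dist_self g y : dist g y y = 0%N.
Proof.
rewrite /dist; have -> : iota 0 n = 0%N :: iota 1 n.-1.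
  by rewrite -(prednK (leq_ltn_trans (leq0n _) (ltn_ord y))).
by rewrite /= walk0 eqxx.
Qed.

Lemma dist_pos g y z : connect g y z -> y != z -> (1 <= dist g y z)%N.
Proof.
move=> hc hyz; apply: dist_ge => // m; rewrite ltnS leqn0 => /eqP ->.
by rewrite walk0.
Qed.

Lemma dist_mono g h y z : (forall u v, g u v -> h u v) -> connect g y z -> (dist h y z <= dist g y z)%N.
Proof.
move=> sub hc; case: (dist_walk hc) => hw _; apply: dist_le; exact: walk_sub hw.
Qed.

Lemma connect_mono g h y z : (forall u v, g u v -> h u v) -> connect g y z -> connect h y z.
Proof. move=> sub; apply: connect_sub => u v huv; apply: connect1; exact: sub. Qed.

Lemma dist_adj g y z : g y z -> y != z -> dist g y z = 1%N.
Proof.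
move=> hg hyz; apply/eqP; rewrite eqn_leq dist_le ?walk1 //=.
by apply: dist_pos => //; apply: connect1.
Qed.

Lemma connect_stuck (e : rel 'I_n) y z : (forall v, ~~ e y v) -> connect e y z -> z = y.
Proof.
move=> hn /connectP[[|a p] /= hp ->] //.
by move: hp (hn a) => /andP[-> _].
Qed.

Lemma connect_closedP (e : rel 'I_n) (S : pred 'I_n) y z :
  (forall u v, S u -> e u v -> S v) -> S y -> connect e y z -> S z.
Proof.
move=> hS hy /connectP[p hp ->]; elim: p y hy hp => [|a p IH] y hy //= /andP[h1 h2].
exact: IH (hS _ _ hy h1) h2.
Qed.

Lemma ess_neq g x y z : essential g x y z -> y != z.
Proof. by case/and4P => _ _ _; apply: contraNneq => ->; rewrite connect0. Qed.

Lemma ess_nadj g x y z : essential g x y z -> ~~ g y z.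
Proof.
case/and4P => hxy hxz _; apply: contra => hg; apply: connect1.
by rewrite /avoid hg eq_sym hxy eq_sym hxz.
Qed.

Lemma ess_conn g x y z : essential g x y z -> connect g y z.
Proof. by case/and4P. Qed.

Lemma ess_dist g x y z : essential g x y z -> (2 <= dist g y z)%N.
Proof.
move=> he; apply: dist_ge; first exact: ess_conn he.
case=> [_|[_|//]]; first by rewrite walk0 (ess_neq he).
by rewrite walk1 (ess_nadj he).
Qed.

Lemma ess_mono g h x y z : (forall u v, g u v -> h u v) -> connect g y z ->
  essential h x y z -> essential g x y z.
Proof.
move=> sub hc /and4P[h1 h2 _ h4]; apply/and4P; split => //.
apply: contra h4; apply: connect_mono => u v /and3P[? ? ?].
by apply/and3P; split => //; apply: sub.
Qed.

Lemma ness_mono g h y z : (forall u v, g u v -> h u v) -> connect g y z ->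
  (ness h y z <= ness g y z)%N.
Proof.
move=> sub hc; apply: subset_leq_card; apply/subsetP => x.
by rewrite !inE; apply: ess_mono.
Qed.

Lemma ness_pos g x y z : essential g x y z -> (0 < ness g y z)%N.
Proof. by move=> he; apply/card_gt0P; exists x; rewrite inE. Qed.

Lemma not_ess_hub g x hb y z : x != hb ->
  (forall u, u != x -> u != hb -> g u hb && g hb u) -> ~~ essential g x y z.
Proof.
move=> hx hh; apply/negP => /and4P[hxy hxz _ /negP[]].
have hyh : connect (avoid g x) y hb.
  case: (eqVneq y hb) => [->|hyb]; first exact: connect0.
  have hyx : y != x by rewrite eq_sym.
  apply: connect1; case/andP: (hh y hyx hyb) => h1 _.
  by rewrite /avoid h1 hyx eq_sym hx.
apply: (connect_trans hyh).
case: (eqVneq z hb) => [->|hzb]; first exact: connect0.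
apply: connect1; have hzx : z != x by rewrite eq_sym.
by case/andP: (hh z hzx hzb) => _ h1; rewrite /avoid h1 hzx eq_sym hx.
Qed.

End Graph.

Definition isstar n (g : rel 'I_n) (ctr : 'I_n) :=
  forall u v, g u v = (u != v) && ((u == ctr) || (v == ctr)).

Section Star.
Variable n : nat.
Variable g : rel 'I_n.
Variable ctr : 'I_n.
Hypothesis hst : isstar g ctr.

Lemma star_sym u v : g u v = g v u.
Proof. by rewrite !hst eq_sym orbC. Qed.

Lemma star_irr u : g u u = false.
Proof. by rewrite hst eqxx. Qed.

Lemma star_conn u v : connect g u v.
Proof.
case: (eqVneq u ctr) => [->|hu].
  case: (eqVneq v ctr) => [->|hv]; first exact: connect0.
  by apply: connect1; rewrite hst eqxx eq_sym hv.
apply: (@connect_trans _ _ ctr); first by apply: connect1; rewrite hst hu eqxx orbT.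
case: (eqVneq v ctr) => [->|hv]; first exact: connect0.
by apply: connect1; rewrite hst eqxx eq_sym hv.
Qed.

Lemma star_dist u v : dist g u v = if u == v then 0 else if (u == ctr) || (v == ctr) then 1 else 2.
Proof.
case: (eqVneq u v) => [->|huv]; first exact: dist_self.
case: ifP => hc; first by apply: dist_adj => //; rewrite hst huv hc.
apply/eqP; rewrite eqn_leq; apply/andP; split.
  apply: dist_le; rewrite walk2; apply/existsP; exists ctr.
  by rewrite !hst eqxx !orbT /=; move/norP: hc => [h1 h2]; rewrite h1 eq_sym h2.
apply: dist_ge; first exact: star_conn.
case=> [_|[_|//]]; first by rewrite walk0.
by rewrite walk1 hst hc andbF.
Qed.

Lemma star_ess x y z : essential g x y z = [&& x == ctr, y != ctr, z != ctr & y != z].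
Proof.
apply/idP/idP.
  move=> he; have hx : x == ctr.
    apply: contraT => hx.
    have := @not_ess_hub _ g x ctr y z hx.
    rewrite he; apply => u hux huc.
    by rewrite !hst eqxx orbT andbT (eq_sym ctr) huc /=.
  move/eqP: hx => hx; case/and4P: (he) => h1 h2 _ _.
  by rewrite hx eqxx -hx eq_sym h1 eq_sym h2 (ess_neq he).
case/and4P => /eqP -> hy hz hyz; apply/and4P; split; rewrite ?(eq_sym ctr) //.
  exact: star_conn.
apply/negP => hc.
have : z = y.
  apply: (connect_stuck _ hc) => v; rewrite /avoid hst.
  by rewrite (negbTE hy) /=; case: (v == ctr); rewrite ?andbF ?andbT.
by move=> hzy; move: hyz; rewrite hzy eqxx.
Qed.

Lemma star_ness y z : ness g y z = if [&& y != ctr, z != ctr & y != z] then 1%N else 0%N.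
Proof.
rewrite /ness; case: ifP => hc.
  rewrite -(card1 ctr); apply: eq_card => x; rewrite !inE star_ess hc andbT.
  by [].
by apply: eq_card0 => x; rewrite !inE star_ess hc andbF.
Qed.

End Star.

Section Ext.
Variable n : nat.
Implicit Types (g : rel 'I_n) (a t : 'I_n).

Notation wid := (widen_ord (leqnSn n)).

Lemma wid_lift a : wid a = lift ord_max a.
Proof. by apply: val_inj; rewrite /= /bump leqNgt ltn_ord. Qed.

Lemma ordS_case (x : 'I_n.+1) : x = ord_max \/ exists a, x = wid a.
Proof. by case: (unliftP ord_max x) => [a ->|->]; [right; exists a; rewrite wid_lift | left]. Qed.

Lemma wid_eq a a' : (wid a == wid a') = (a == a').
Proof. by rewrite !wid_lift (inj_eq lift_inj). Qed.

Lemma wid_neqN a : (wid a == ord_max) = false.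
Proof. by rewrite wid_lift eq_sym (negbTE (neq_lift _ _)). Qed.

Lemma ext_ww g t a a' : ext g t (wid a) (wid a') = g a a'.
Proof. by rewrite /ext !wid_lift !liftK. Qed.

Lemma ext_Nw g t a : ext g t ord_max (wid a) = (a == t).
Proof. by rewrite /ext unlift_none wid_lift liftK. Qed.

Lemma ext_wN g t a : ext g t (wid a) ord_max = (a == t).
Proof. by rewrite /ext unlift_none wid_lift liftK. Qed.

Lemma ext_NN g t : ext g t ord_max ord_max = false.
Proof. by rewrite /ext unlift_none. Qed.

Lemma ext_star g t : isstar g t -> isstar (ext g t) (wid t).
Proof.
move=> hst u v.
case: (ordS_case u) => [->|[a ->]]; case: (ordS_case v) => [->|[a' ->]].
- by rewrite ext_NN eqxx.
- by rewrite ext_Nw !(eq_sym ord_max) !wid_neqN wid_eq /=.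
- by rewrite ext_wN !(eq_sym ord_max) !wid_neqN wid_eq orbF.
- by rewrite ext_ww hst !wid_eq.
Qed.

End Ext.

Lemma star2_swap (g : rel 'I_2) ctr t : isstar g ctr -> t != ctr -> isstar g t.
Proof.
have h2 : forall x u v : 'I_2, u != v -> (u == x) || (v == x).
  by move=> [[|[|//]] ?] [[|[|//]] ?] [[|[|//]] ?].
move=> hst _ u v; rewrite hst; case: (eqVneq u v) => //= huv.
by rewrite !h2.
Qed.

Lemma exists_third n (ctr t : 'I_n) : (2 < n)%N -> exists v0, (v0 != ctr) && (v0 != t).
Proof.
move=> hn; have : (0 < #|~: [set ctr; t]|)%N.
  rewrite (cardsCs (~: [set ctr; t])) setCK card_ord cards2.
  by case: (ctr != t); rewrite subn_gt0 //; apply: ltnW.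
by case/card_gt0P => v; rewrite in_setC in_set2 negb_or => hv; exists v.
Qed.

Section Par.
Variable n : nat.
Variable g : rel 'I_n.
Variable ctr : 'I_n.

Definition par (w : 'I_n) : 'I_n :=
  odflt ctr [pick u | g u w && (dist g ctr u < dist g ctr w)%N].

Lemma parP w : connect g ctr w -> w != ctr ->
  g (par w) w && (dist g ctr (par w) < dist g ctr w)%N.
Proof.
move=> hc hw; rewrite /par; case: pickP => [u hu | hnone] //=.
exfalso; case: (dist_walk hc) => hwk _.
have hd1 : (1 <= dist g ctr w)%N by apply: dist_pos hc _; rewrite eq_sym.
move: hwk hd1; set d := dist g ctr w => hwk hd1.
case/walk_kP: hwk => s [hs hp hl].
move: hs hp hl; case/lastP: s => [|s' x] hs hp hl.
  by move: hd1; rewrite -hs.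
rewrite last_rcons in hl; rewrite rcons_path hl in hp; case/andP: hp => hp1 hp2.
have hwu : walk_k g ctr (last ctr s') (size s') by apply/walk_kP; exists s'.
have h := dist_le hwu; rewrite size_rcons in hs.
have hlt : (dist g ctr (last ctr s') < d)%N by rewrite -hs ltnS.
by have := hnone (last ctr s'); rewrite /= hp2 hlt.
Qed.

End Par.

Local Open Scope ring_scope.

Section Util.
Variable R : realFieldType.
Variables (b : nat -> R) (c gamma : R).
Hypothesis hb : forall k : nat, (0 < k)%N -> 0 < b k.+1 /\ b k.+1 < b k.
Hypothesis hg0 : 0 <= gamma.
Hypothesis hg1 : gamma < 1.

Lemma b_pos k : (0 < k)%N -> 0 < b k.
Proof.
case: k => [//|[_|k _]]; first by case: (hb (isT : (0 < 1)%N)) => h1 h2; lra.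
by case: (hb (isT : (0 < k.+1)%N)).
Qed.

Lemma b_anti m k : (0 < m)%N -> (m <= k)%N -> b k <= b m.
Proof.
move=> hm; elim: k => [|k IH]; first by rewrite leqn0 => /eqP h; move: hm; rewrite h.
rewrite leq_eqVlt => /orP[/eqP ->//|]; rewrite ltnS => hmk.
have hk : (0 < k)%N by apply: leq_trans hmk.
by case: (hb hk) => _ h; move: (IH hmk) => h'; apply: le_trans h'; apply: ltW.
Qed.

Section G.
Variable n : nat.
Implicit Types (g h : rel 'I_n) (x y z u v w i j : 'I_n).

Definition rr g i w : R :=
  (if connect g i w && (1 < dist g i w)%N then b (dist g i w) else 0)
  - (if [exists x, essential g x i w] then gamma * b (dist g i w) else 0).
Definition psi g i w : R := (if g i w then b 1 - c else 0) + rr g i w.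
Definition Iterm g y z : R := gamma / (ness g y z)%:R * 2%:R * b (dist g y z).
Definition II g i : R :=
  \sum_(y : 'I_n) \sum_(z : 'I_n) (if (y < z)%N && essential g i y z then Iterm g y z else 0).

Lemma utilE g i : util b c gamma g i = \sum_w psi g i w + II g i.
Proof.
rewrite /util /II; congr (_ + _); last by apply: eq_bigr => y _; rewrite big_mkcond.
rewrite /psi /rr big_split /= sumrB addrA; congr (_ + _ - _); last by rewrite big_mkcond.
  by rewrite /deg mulr_natl -sumr_const big_mkcond.
by rewrite big_mkcond.
Qed.


Lemma ess_PQ g x i w : essential g x i w -> connect g i w && (1 < dist g i w)%N.
Proof. by move=> he; rewrite (ess_conn he) (ess_dist he). Qed.

Lemma rr_Q g i w : [exists x, essential g x i w] -> rr g i w = (1 - gamma) * b (dist g i w).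
Proof. by move=> hQ; case/existsP: (hQ) => x /ess_PQ hP; rewrite /rr hP hQ; ring. Qed.

Lemma rr_nQ g i w : ~~ [exists x, essential g x i w] ->
  rr g i w = if connect g i w && (1 < dist g i w)%N then b (dist g i w) else 0.
Proof. by move=> hQ; rewrite /rr (negbTE hQ) subr0. Qed.

Lemma nQ_of_nP g i w : ~~ (connect g i w && (1 < dist g i w)%N) -> ~~ [exists x, essential g x i w].
Proof. by move=> hP; apply/existsP => [[x /ess_PQ]]; apply/negP. Qed.

Lemma rr_nP g i w : ~~ (connect g i w && (1 < dist g i w)%N) -> rr g i w = 0.
Proof. by move=> hP; rewrite rr_nQ ?nQ_of_nP // (negbTE hP). Qed.

Lemma rr_adj g i w : g i w -> rr g i w = 0.
Proof.
move=> hg; apply: rr_nP; apply/negP => /andP[_].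
by rewrite ltnNge (dist_le (_ : walk_k g i w 1)) // walk1.
Qed.

Lemma rr_self g i : rr g i i = 0.
Proof. by apply: rr_nP; rewrite dist_self andbF. Qed.

Lemma rr_nconn g i w : ~~ connect g i w -> rr g i w = 0.
Proof. by move=> hc; apply: rr_nP; rewrite (negbTE hc). Qed.

Lemma rr_ge0 g i w : 0 <= rr g i w.
Proof.
case hQ: [exists x, essential g x i w].
  rewrite rr_Q //; case/existsP: hQ => x /ess_dist hd.
  apply: mulr_ge0; [by rewrite subr_ge0 ltW | apply: ltW; apply: b_pos; exact: ltnW hd].
rewrite rr_nQ ?hQ //; case: ifP => // /andP[_ hd].
by apply: ltW; apply: b_pos; exact: ltnW hd.
Qed.

Lemma rr_le2 g i w : rr g i w <= b 2.
Proof.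
case hQ: [exists x, essential g x i w].
  rewrite rr_Q //; case/existsP: hQ => x /ess_dist hd.
  have h1 := b_anti (isT : (0 < 2)%N) hd.
  have h2 : 0 < b (dist g i w) by apply: b_pos; exact: ltnW hd.
  have := mulr_ge0 hg0 (ltW h2); rewrite mulrBl mul1r; lra.
rewrite rr_nQ ?hQ //; case: ifP => [/andP[_ hd]|_]; first exact: b_anti hd.
by apply: ltW; apply: b_pos.
Qed.

Lemma Iterm_ge0 g x y z : essential g x y z -> 0 <= Iterm g y z.
Proof.
move=> he; rewrite /Iterm; have hd := dist_pos (ess_conn he) (ess_neq he).
apply: mulr_ge0; last by apply: ltW; apply: b_pos.
by apply: mulr_ge0 => //; apply: divr_ge0.
Qed.

Lemma II_ge0 g i : 0 <= II g i.
Proof.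
apply: sumr_ge0 => y _; apply: sumr_ge0 => z _; case: ifP => // /andP[_ he].
exact: Iterm_ge0 he.
Qed.

Lemma add_gain g g' i j : i != j ->
  (forall u v, g' u v = [|| g u v, (u == i) && (v == j) | (u == j) && (v == i)]) ->
  util b c gamma g i + ((b 1 - c) - psi g i j) <= util b c gamma g' i.
Proof.
move=> hij hg'.
have sub : forall u v, g u v -> g' u v by move=> u v huv; rewrite hg' huv.
have g'ij : g' i j by rewrite hg' !eqxx orbT.
have adj_same : forall w, w != j -> g' i w = g i w.
  by move=> w hw; rewrite hg' eqxx (negbTE hw) (negbTE hij) /= !orbF.
have avoid_same : forall u v, avoid g' i u v = avoid g i u v.
  move=> u v; rewrite /avoid hg'; case: (eqVneq u i) => [->|hu]; first by rewrite !andbF.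
  case: (eqVneq v i) => [->|hv]; first by rewrite !andbF.
  by rewrite !andbF /= !orbF.
have hpsi' : psi g' i j = b 1 - c by rewrite /psi g'ij rr_adj // addr0.
have hS : \sum_(w | w != j) psi g i w <= \sum_(w | w != j) psi g' i w.
  apply: ler_sum => w hw; rewrite /psi adj_same // lerD2l.
  case hP: (connect g i w && (1 < dist g i w)%N); last first.
    by rewrite rr_nP ?hP // rr_ge0.
  case/andP: hP => hc hd.
  have hiw : i != w by apply: contraTneq hd => ->; rewrite dist_self.
  have hgiw : ~~ g i w.
    by apply: contraTN hd => hg; rewrite -leqNgt dist_le // walk1.
  have hc' : connect g' i w := connect_mono sub hc.
  have hd'le : (dist g' i w <= dist g i w)%N := dist_mono sub hc.
  have hd' : (2 <= dist g' i w)%N.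
    apply: dist_ge => //; case=> [_|[_|//]]; first by rewrite walk0.
    by rewrite walk1 adj_same.
  have hbb : b (dist g i w) <= b (dist g' i w) by apply: b_anti => //; apply: leq_trans hd'.
  have hb0 : 0 < b (dist g i w) by apply: b_pos; apply: leq_trans hd.
  case hQ': [exists x, essential g' x i w].
    have hQ : [exists x, essential g x i w].
      by case/existsP: hQ' => x hx; apply/existsP; exists x; apply: ess_mono hx.
    by rewrite !rr_Q //; apply: ler_wpM2l => //; rewrite subr_ge0 ltW.
  rewrite (rr_nQ (negbT hQ')) hc' hd' /rr hc hd.
  have := mulr_ge0 hg0 (ltW hb0).
  case: ifP => _ /=; lra.
have hI : II g i <= II g' i.
  apply: ler_sum => y _; apply: ler_sum => z _.
  case hE: ((y < z)%N && essential g i y z); last first.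
    by case: ifP => // /andP[_ he]; apply: Iterm_ge0 he.
  case/andP: hE => hyz he.
  have he' : essential g' i y z.
    case/and4P: (he) => h1 h2 h3 h4; apply/and4P; split => //; first exact: connect_mono sub h3.
    by rewrite (eq_connect avoid_same).
  rewrite hyz he' /=.
  have hc := ess_conn he.
  have hne := ess_neq he.
  have hd1 : (1 <= dist g y z)%N := dist_pos hc hne.
  have hd1' : (1 <= dist g' y z)%N := dist_pos (connect_mono sub hc) hne.
  have hbb : b (dist g y z) <= b (dist g' y z) by apply: b_anti => //; apply: dist_mono.
  have hb0 : 0 < b (dist g y z) by apply: b_pos.
  have he1 : (0 < ness g' y z)%N := ness_pos he'.
  have hee : (ness g' y z <= ness g y z)%N := ness_mono sub hc.
  have hinv : (ness g y z)%:R^-1 <= (ness g' y z)%:R^-1 :> R.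
    rewrite lef_pV2 ?posrE ?ltr0n ?ler_nat //; by apply: leq_trans hee.
  rewrite /Iterm; apply: ler_pM; last exact: hbb; last first.
  - by apply: ler_wpM2r => //; apply: ler_wpM2l.
  - by apply: ltW.
  - by apply: mulr_ge0 => //; apply: divr_ge0.
rewrite !utilE (bigD1 j) //= [X in _ <= X + _](bigD1 j) //= hpsi'.
lra.
Qed.


Lemma psi_le_adj g i w : g i w -> psi g i w = b 1 - c.
Proof. by move=> h; rewrite /psi h rr_adj // addr0. Qed.

Lemma psi_nadj g i w : ~~ g i w -> psi g i w = rr g i w.
Proof. by move=> h; rewrite /psi (negbTE h) add0r. Qed.

Lemma psi_le_b1c g i w : b 2 < b 1 - c -> psi g i w <= b 1 - c.
Proof.
move=> h; case hg: (g i w); first by rewrite psi_le_adj.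
rewrite psi_nadj ?hg //; have := rr_le2 g i w; lra.
Qed.

Lemma addl_spec_i g i j u v :
  addl g i j u v = [|| g u v, (u == i) && (v == j) | (u == j) && (v == i)].
Proof. by []. Qed.

Lemma addl_spec_j g i j u v :
  addl g i j u v = [|| g u v, (u == j) && (v == i) | (u == i) && (v == j)].
Proof. by rewrite /addl [X in _ || X]orbC. Qed.

Lemma ps_complete g : b 2 < b 1 - c -> pairwise_stable b c gamma g ->
  forall i j, i != j -> g i j.
Proof.
move=> hbc [_ hps] i j hij; apply/negPn/negP => hnij.
have h1 := add_gain hij (addl_spec_i g i j).
have hji : j != i by rewrite eq_sym.
have h2 := add_gain hji (addl_spec_j g i j).
have h3 := psi_le_b1c g j i hbc.
rewrite psi_nadj // in h1; have h4 := rr_le2 g i j.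
have := hps i j hij hnij; lra.
Qed.

Definition phi g j w : R := (if g j w then b 1 - c else 0)
  + (if connect g j w && (1 < dist g j w)%N then b (dist g j w) else 0).

Lemma welfareE g : welfare b c g = \sum_j \sum_w phi g j w.
Proof.
rewrite /welfare; apply: eq_bigr => j _; rewrite /phi big_split /=; congr (_ + _).
  by rewrite /deg mulr_natl -sumr_const big_mkcond.
by rewrite big_mkcond.
Qed.

Lemma sec_ge0 g j w : 0 <= (if connect g j w && (1 < dist g j w)%N then b (dist g j w) else 0).
Proof. by case: ifP => // /andP[_ hd]; apply: ltW; apply: b_pos; exact: ltnW hd. Qed.

Lemma sec_le2 g j w : (if connect g j w && (1 < dist g j w)%N then b (dist g j w) else 0) <= b 2.
Proof. by case: ifP => [/andP[_ hd]|_]; [exact: b_anti hd | apply: ltW; apply: b_pos]. Qed.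

Lemma sec_adj g j w : g j w -> (if connect g j w && (1 < dist g j w)%N then b (dist g j w) else 0) = 0.
Proof. by move=> h; rewrite ltnNge (dist_le (_ : walk_k g j w 1)) ?walk1 // andbF. Qed.

Lemma sec_self g j : (if connect g j j && (1 < dist g j j)%N then b (dist g j j) else 0) = 0.
Proof. by rewrite dist_self andbF. Qed.

Lemma complete_efficient g : b 2 < b 1 - c -> (forall i j, i != j -> g i j) -> efficient b c g.
Proof.
move=> hbc hc g' [_ hirr]; rewrite !welfareE; apply: ler_sum => j _; apply: ler_sum => w _.
have hb2 : 0 < b 2 by apply: b_pos.
apply: (@le_trans _ _ (if j == w then 0 else b 1 - c)).
  rewrite /phi; case: eqVneq => [->|hjw]; first by rewrite hirr sec_self addr0.
  case hg: (g' j w); first by rewrite sec_adj // addr0.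
  have := sec_le2 g' j w; have := sec_ge0 g' j w; lra.
rewrite /phi; have := sec_ge0 g j w; case: (eqVneq j w) => [_|hjw].
  by case: (g j w) => /=; lra.
by rewrite (hc j w hjw) /=; lra.
Qed.

End G.
End Util.

Section P2.
Variable R : realFieldType.
Variables (b : nat -> R) (c gamma : R).
Hypothesis hb : forall k : nat, (0 < k)%N -> 0 < b k.+1 /\ b k.+1 < b k.
Hypothesis hg0 : 0 <= gamma.
Hypothesis hg1 : gamma < 1.

Section G.
Variable n : nat.
Implicit Types (g h : rel 'I_n) (x y z u v w i j l ctr : 'I_n).

Lemma psi_star_ctr g ctr w : isstar g ctr ->
  psi b c gamma g ctr w = if w == ctr then 0 else b 1 - c.
Proof.
move=> hst; case: (eqVneq w ctr) => [->|hw].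
  by rewrite psi_nadj ?(star_irr hst) // rr_self.
by rewrite psi_le_adj // hst eqxx eq_sym hw.
Qed.

Lemma psi_star_leaf g ctr l w : isstar g ctr -> l != ctr ->
  psi b c gamma g l w =
  if w == l then 0 else if w == ctr then b 1 - c else (1 - gamma) * b 2.
Proof.
move=> hst hl; case: (eqVneq w l) => [->|hwl].
  by rewrite psi_nadj ?(star_irr hst) // rr_self.
case: (eqVneq w ctr) => [->|hwc].
  by rewrite psi_le_adj // hst hl eqxx orbT.
have hn : ~~ g l w by rewrite hst (negbTE hl) (negbTE hwc) andbF.
rewrite psi_nadj // rr_Q //; last first.
  by apply/existsP; exists ctr; rewrite (star_ess hst) eqxx hl hwc eq_sym hwl.
by rewrite (star_dist hst) (negbTE hl) (negbTE hwc) eq_sym (negbTE hwl).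
Qed.

Lemma II_star_leaf g ctr l : isstar g ctr -> l != ctr -> II b gamma g l = 0.
Proof.
move=> hst hl; apply: big1 => y _; apply: big1 => z _.
by rewrite (star_ess hst) (negbTE hl) andbF.
Qed.

Lemma II_star_ctr g ctr : isstar g ctr ->
  II b gamma g ctr = \sum_(y : 'I_n) \sum_(z : 'I_n)
    (if (y < z)%N && [&& y != ctr, z != ctr & y != z] then gamma * 2%:R * b 2 else 0).
Proof.
move=> hst; apply: eq_bigr => y _; apply: eq_bigr => z _.
rewrite (star_ess hst) eqxx /=; case: ifP => // /andP[_ hc].
rewrite /Iterm (star_ness hst) hc (star_dist hst).
case/and3P: hc => hy hz hyz.
by rewrite (negbTE hy) (negbTE hz) (negbTE hyz) /= divr1.
Qed.

Lemma del_gain g h i j : i != j -> c < b 1 ->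
  (forall u v, g u v = [|| h u v, (u == i) && (v == j) | (u == j) && (v == i)]) ->
  ~~ h i j -> ~~ connect h i j ->
  util b c gamma h i <= util b c gamma g i.
Proof.
move=> hij hc hs hn hnc; have := add_gain c hb hg0 hg1 hij hs.
by rewrite psi_nadj // rr_nconn //; lra.
Qed.

Lemma star_ps g ctr : isstar g ctr -> b 1 - c <= (1 - gamma) * b 2 -> c < b 1 ->
  pairwise_stable b c gamma g.
Proof.
move=> hst hbc hc; split.
  move=> i j hij; set h := dell g i j.
  have hne : i != j by apply: contraTneq hij => ->; rewrite (star_irr hst).
  have hji : j != i by rewrite eq_sym.
  have spec_i : forall u v, g u v = [|| h u v, (u == i) && (v == j) | (u == j) && (v == i)].
    move=> u v; rewrite /h /dell.
    case: (boolP (((u == i) && (v == j)) || ((u == j) && (v == i)))) => hp.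
      rewrite andbF orFb.
      by case/orP: hp => /andP[/eqP -> /eqP ->] //; rewrite (star_sym hst).
    by rewrite andbT orbF.
  have spec_j : forall u v, g u v = [|| h u v, (u == j) && (v == i) | (u == i) && (v == j)].
    by move=> u v; rewrite spec_i [X in _ || X]orbC.
  have hsym : forall u v, h u v = h v u.
    move=> u v; rewrite /h /dell (star_sym hst u v).
    by case: (u == i); case: (u == j); case: (v == i); case: (v == j).
  have hnij : ~~ h i j by rewrite /h /dell !eqxx andbF.
  have hnji : ~~ h j i by rewrite hsym.
  have hconn : connect h i j = connect h j i.
    by rewrite (sym_connect_sym (e := h)) //.
  have hnc : ~~ connect h i j.
    move: (hij); rewrite hst hne /= => /orP[/eqP hic | /eqP hjc].
      have iso : forall v, ~~ h j v.
        move=> v; rewrite /h /dell hst hic eqxx -hic (negbTE hji).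
        by case: (v == i); rewrite /= ?andbF ?andbT.
      rewrite hconn; apply/negP => /(connect_stuck iso) hij'.
      by move: hji; rewrite hij' eqxx.
    have iso : forall v, ~~ h i v.
      move=> v; rewrite /h /dell hst hjc eqxx -hjc (negbTE hne).
      by case: (v == j); rewrite /= ?andbF ?andbT.
    apply/negP => /(connect_stuck iso) hji'.
    by move: hne; rewrite hji' eqxx.
  split.
    exact: del_gain hne hc spec_i hnij hnc.
  by apply: del_gain hji hc spec_j hnji _; rewrite -hconn.
move=> i j hij hnij hlt; exfalso; move: hlt; apply/negP; rewrite -leNgt.
have hn2 : ~~ ((i == ctr) || (j == ctr)) by move: hnij; rewrite hst hij.
case/norP: hn2 => hic hjc.
have hji : j != i by rewrite eq_sym.
set g' := addl g i j.
have sub : forall u v, g u v -> g' u v by move=> u v h1; rewrite /g' /addl h1.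
rewrite !utilE; apply: lerD; last first.
  rewrite (II_star_leaf hst hic).
  apply: sumr_le0 => y _; apply: sumr_le0 => z _; case: ifP => // /andP[_ he].
  exfalso; move: he; apply/negP.
  apply: (@not_ess_hub _ g' i ctr) => // u hui huc.
  apply/andP; split; apply: sub; rewrite hst eqxx ?orbT ?andbT //; by rewrite eq_sym.
apply: ler_sum => w _; rewrite (psi_star_leaf _ hst hic).
case: (eqVneq w i) => [->|hwi].
  rewrite psi_nadj ?rr_self //.
  by rewrite /g' /addl (star_irr hst) eqxx (negbTE hij).
case: (eqVneq w ctr) => [->|hwc].
  by rewrite psi_le_adj // sub // hst hic eqxx orbT.
case: (eqVneq w j) => [->|hwj].
  by rewrite psi_le_adj // /g' /addl !eqxx orbT.
have hn : ~~ g' i w.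
  by rewrite /g' /addl hst (negbTE hic) (negbTE hwc) eqxx (negbTE hwj) (negbTE hij) /= andbF.
have he : essential g' ctr i w.
  apply/and4P; split; rewrite 1?eq_sym //.
    exact: connect_mono sub (star_conn hst i w).
  apply/negP => hcn.
  have : (fun x => (x == i) || (x == j)) w.
    apply: (@connect_closedP _ _ (fun x => (x == i) || (x == j)) i w _ _ hcn); last by rewrite eqxx.
    move=> u v _ /and3P[]; rewrite /g' /addl hst => huv hu hv.
    move: huv; rewrite (negbTE hu) (negbTE hv) /= andbF /=.
    by case/orP => /andP[_ ->]; rewrite ?orbT.
  by rewrite /= (negbTE hwi) (negbTE hwj).
rewrite psi_nadj // rr_Q; last by apply/existsP; exists ctr.
apply: ler_wpM2l; first by rewrite subr_ge0 ltW.
exact: b_anti (ess_dist he).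
Qed.


End G.

Section G2.
Variable n : nat.
Implicit Types (g h : rel 'I_n) (x y z u v w i j l ctr : 'I_n).

Lemma degE g x : (deg g x)%:R = \sum_v (if g x v then 1 else 0) :> R.
Proof. by rewrite /deg -sum1_card natr_sum big_mkcond. Qed.

Notation wid := (widen_ord (leqnSn n)).

Lemma star_accepts g ctr : isstar g ctr -> c < b 1 -> accepts b c gamma g ctr.
Proof.
move=> hst hc; have hst' := ext_star hst.
rewrite /accepts !utilE; apply: lerD.
  rewrite [X in _ <= X]big_ord_recr /= (psi_star_ctr _ hst') eq_sym wid_neqN.
  apply: (@le_trans _ _ (\sum_(i < n) psi b c gamma (ext g ctr) (wid ctr) (wid i))).
    apply: ler_sum => w _; rewrite (psi_star_ctr _ hst) (psi_star_ctr _ hst') wid_eq.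
    by [].
  by rewrite lerDl; lra.
rewrite (II_star_ctr hst) (II_star_ctr hst') [X in _ <= X]big_ord_recr /=.
have hT : 0 <= gamma * 2%:R * b 2.
  by apply: mulr_ge0; [apply: mulr_ge0 | apply: ltW; apply: b_pos].
rewrite -[X in X <= _]addr0; apply: lerD; last first.
  by apply: sumr_ge0 => z _; case: ifP.
apply: ler_sum => y _; rewrite [X in _ <= X]big_ord_recr /=.
rewrite -[X in X <= _]addr0; apply: lerD; last by case: ifP.
by apply: ler_sum => z _; rewrite !wid_eq.
Qed.

Lemma ext_leaf_bound g ctr t : isstar g ctr -> t != ctr ->
  util b c gamma (ext g t) ord_max <=
  \sum_(a : 'I_n) (if a == t then b 1 - c else if a == ctr then (1 - gamma) * b 2
                   else (1 - gamma) * b 3).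
Proof.
move=> hst htc; rewrite utilE.
have hII : II b gamma (ext g t) ord_max = 0.
  apply: big1 => y _; apply: big1 => z _; case: ifP => // /andP[_ he].
  exfalso; move: he; apply/negP.
  apply: (@not_ess_hub _ (ext g t) ord_max (wid ctr)); first by rewrite eq_sym wid_neqN.
  move=> u huN huc; case: (ordS_case u) => [hu|[a hu]]; first by rewrite hu eqxx in huN.
  rewrite hu !ext_ww !hst eqxx !orbT andbT; rewrite hu wid_eq in huc.
  by rewrite huc eq_sym huc.
rewrite hII addr0 big_ord_recr /= psi_nadj ?ext_NN // rr_self addr0.
apply: ler_sum => a _.
case: (eqVneq a t) => [->|hat]; first by rewrite psi_le_adj // ext_Nw eqxx.
have hn : ~~ ext g t ord_max (wid a) by rewrite ext_Nw (negbTE hat).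
have htn : wid t != ord_max by rewrite wid_neqN.
have he : essential (ext g t) (wid t) ord_max (wid a).
  apply/and4P; split => //; first by rewrite wid_eq eq_sym.
    apply: (@connect_trans _ _ (wid t)); first by apply: connect1; rewrite ext_Nw eqxx.
    case: (eqVneq a ctr) => [->|hac]; first by apply: connect1; rewrite ext_ww hst htc eqxx orbT.
    apply: (@connect_trans _ _ (wid ctr)); first by apply: connect1; rewrite ext_ww hst htc eqxx orbT.
    by apply: connect1; rewrite ext_ww hst eqxx eq_sym hac.
  apply/negP => hcn.
  have : wid a = ord_max.
    apply: (connect_stuck _ hcn) => v; rewrite /avoid.
    case: (ordS_case v) => [->|[b' ->]]; first by rewrite ext_NN.
    rewrite ext_Nw; case: (eqVneq b' t) => [->|]; first by rewrite eqxx !andbF.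
    by [].
  by move/eqP; rewrite wid_neqN.
rewrite psi_nadj // rr_Q; last by apply/existsP; exists (wid t).
have h1g : 0 <= 1 - gamma by rewrite subr_ge0 ltW.
case: (eqVneq a ctr) => [hac|hac].
  by apply: ler_wpM2l => //; apply: b_anti (ess_dist he).
apply: ler_wpM2l => //; apply: b_anti => //.
apply: dist_ge; first exact: ess_conn he.
case=> [_|[_|[_|//]]]; first by rewrite walk0 eq_sym wid_neqN.
  by rewrite walk1.
rewrite walk2; apply/existsP => [[x /andP[h1 h2]]].
case: (ordS_case x) h1 h2 => [->|[b' ->]]; first by rewrite ext_NN.
rewrite ext_Nw ext_ww => /eqP ->; rewrite hst (negbTE htc) (negbTE hac).
by rewrite andbF.
Qed.


Lemma entrant_ctr c0 g ctr : isstar g ctr ->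
  entrant_util b c gamma c0 g ctr =
  \sum_(a : 'I_n) ((if a == ctr then b 1 - c else (1 - gamma) * b 2)
                   - c0 * (if g ctr a then 1 else 0)).
Proof.
move=> hst; have hst' := ext_star hst.
have hN : ord_max != wid ctr by rewrite eq_sym wid_neqN.
rewrite /entrant_util utilE (II_star_leaf hst' hN) addr0 big_ord_recr /=.
rewrite (psi_star_leaf _ hst' hN) eqxx addr0 degE mulr_sumr -sumrB.
apply: eq_bigr => a _; rewrite (psi_star_leaf _ hst' hN) wid_neqN wid_eq.
by [].
Qed.


Lemma entry_cmp c0 g ctr t : isstar g ctr -> t != ctr ->
  (exists v0, (v0 != ctr) && (v0 != t)) -> c0 < (1 - gamma) * (b 2 - b 3) ->
  entrant_util b c gamma c0 g t < entrant_util b c gamma c0 g ctr.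
Proof.
move=> hst htc [v0 /andP[hv0c hv0t]] hc0.
rewrite (entrant_ctr c0 hst).
have E2 : entrant_util b c gamma c0 g t <=
  \sum_(a : 'I_n) ((if a == t then b 1 - c else if a == ctr then (1 - gamma) * b 2
                   else (1 - gamma) * b 3) - c0 * (if g t a then 1 else 0)).
  rewrite /entrant_util degE mulr_sumr sumrB; have := ext_leaf_bound hst htc; lra.
apply: (le_lt_trans E2); rewrite -subr_gt0 -sumrB.
pose D a := ((if a == ctr then b 1 - c else (1 - gamma) * b 2) - c0 * (if g ctr a then 1 else 0))
  - ((if a == t then b 1 - c else if a == ctr then (1 - gamma) * b 2 else (1 - gamma) * b 3)
     - c0 * (if g t a then 1 else 0)).
have hctn : ctr != t by rewrite eq_sym.
have hDct : D ctr + D t = 0.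
  rewrite /D !hst !eqxx (negbTE htc) (negbTE hctn) /=; lra.
have hDo : forall a, a != ctr -> a != t -> D a = (1 - gamma) * b 2 - c0 - (1 - gamma) * b 3.
  move=> a hac hat; rewrite /D !hst (negbTE hac) (negbTE hat) (negbTE htc) eqxx /=.
  rewrite eq_sym hac eq_sym hat /=; lra.
have hpos : 0 < (1 - gamma) * b 2 - c0 - (1 - gamma) * b 3 by rewrite mulrBr in hc0; lra.
rewrite (bigD1 ctr) //= (bigD1 t) /=; last by rewrite htc.
rewrite (bigD1 v0) /=; last by rewrite hv0c hv0t.
have hrest : 0 <= \sum_(i | ((i != ctr) && (i != t)) && (i != v0)) D i.
  apply: sumr_ge0 => a /andP[/andP[hac hat] _]; rewrite hDo //; lra.
change (0 < D ctr + (D t + (D v0 + \sum_(i < n | (i != ctr) && (i != t) && (i != v0)) D i))).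
have := hDo v0 hv0c hv0t; lra.
Qed.


Lemma star_efficient g ctr : isstar g ctr -> c < b 1 -> b 1 - c <= b 2 -> efficient b c g.
Proof.
move=> hst hc hbc g' [hsym hirr].
pose dl := b 2 - (b 1 - c).
have hdl : 0 <= dl by rewrite /dl subr_ge0.
pose X (p : 'I_n * 'I_n) := if p.1 == p.2 then 0 else b 2.
pose S' := [set p : 'I_n * 'I_n | (p.1 != p.2) && (g' p.1 p.2 || ~~ connect g' p.1 p.2)].
pose Ss := [set p : 'I_n * 'I_n | (p.1 != p.2) && ((p.1 == ctr) || (p.2 == ctr))].
have h1 : welfare b c g' <= \sum_(p : 'I_n * 'I_n) (X p - (if p \in S' then dl else 0)).
  rewrite welfareE pair_big /=; apply: ler_sum => [[j w]] _ /=.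
  rewrite /X inE /= /phi.
  case: (eqVneq j w) => [->|hjw] /=; first by rewrite hirr sec_self subr0 addr0.
  case hg: (g' j w) => /=; first by rewrite sec_adj // addr0 /dl; lra.
  case hcn: (connect g' j w) => /=.
    by have := sec_le2 hb g' j w; rewrite hcn subr0 add0r.
  by rewrite /dl; lra.
have h2 : welfare b c g = \sum_(p : 'I_n * 'I_n) (X p - (if p \in Ss then dl else 0)).
  rewrite welfareE pair_big /=; apply: eq_bigr => [[j w]] _ /=.
  rewrite /X inE /= /phi.
  case: (eqVneq j w) => [->|hjw] /=; first by rewrite (star_irr hst) sec_self subr0 addr0.
  case hcw: ((j == ctr) || (w == ctr)) => /=.
    rewrite hst hjw hcw /= sec_adj; last by rewrite hst hjw hcw.
    by rewrite addr0 /dl; lra.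
  rewrite hst hjw hcw /= add0r (star_conn hst) (star_dist hst) (negbTE hjw) hcw /=.
  by rewrite subr0.
have hcard : (#|Ss| <= #|S'|)%N.
  pose A := [set w : 'I_n | w != ctr].
  have hss : Ss \subset ([set (ctr, w) | w in A] :|: [set (w, ctr) | w in A]).
    apply/subsetP => [[j w]]; rewrite !inE /= => /andP[hjw /orP[/eqP hj|/eqP hw]].
      apply/orP; left; apply/imsetP; exists w; last by rewrite hj.
      by rewrite inE -hj eq_sym.
    apply/orP; right; apply/imsetP; exists j; last by rewrite hw.
    by rewrite inE -hw.
  have hSs : (#|Ss| <= #|A| + #|A|)%N.
    apply: (leq_trans (subset_leq_card hss)); rewrite cardsU.
    apply: leq_trans (leq_subr _ _) _; apply: leq_add; apply: leq_imset_card.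
  pose F1 w := if connect g' ctr w then (par g' ctr w, w) else (ctr, w).
  pose F2 w := if connect g' ctr w then (w, par g' ctr w) else (w, ctr).
  have inj1 : injective F1 by move=> w w' /(congr1 snd); rewrite /F1; case: ifP; case: ifP.
  have inj2 : injective F2 by move=> w w' /(congr1 fst); rewrite /F2; case: ifP; case: ifP.
  have hcs : forall w, connect g' w ctr = connect g' ctr w.
    by move=> w; rewrite (sym_connect_sym hsym).
  have hsub : F1 @: A :|: F2 @: A \subset S'.
    apply/subsetP => p; rewrite inE => /orP[] /imsetP[w]; rewrite inE => hw ->;
      rewrite inE /F1 /F2; case: ifP => hcw /=.
    - case/andP: (parP hcw hw) => hpw _; rewrite hpw /= andbT.
      by apply: contraTneq hpw => ->; rewrite hirr.
    - by rewrite hcw orbT andbT eq_sym.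
    - case/andP: (parP hcw hw) => hpw _; rewrite hsym hpw /= andbT.
      by apply: contraTneq hpw => <-; rewrite hirr.
    - by rewrite hcs hcw orbT andbT.
  have hI : F1 @: A :&: F2 @: A = set0.
    apply/setP => p; rewrite in_setI in_set0; apply/negP => /andP[/imsetP[w hw ->] /imsetP[w' hw' e]].
    rewrite !inE in hw hw'; move: e; rewrite /F1 /F2.
    case: ifP => hcw; case: ifP => hcw' [e1 e2].
    - case/andP: (parP hcw hw) => _; rewrite e1 => hh1.
      case/andP: (parP hcw' hw') => _; rewrite -e2 => hh2.
      by move: (ltn_trans hh1 hh2); rewrite ltnn.
    - by move: hw; rewrite e2 eqxx.
    - by move: hw'; rewrite -e1 eqxx.
    - by move: hw'; rewrite -e1 eqxx.
  have hS' : (#|A| + #|A| <= #|S'|)%N.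
    rewrite -{1}(card_imset A inj1) -(card_imset A inj2).
    apply: leq_trans (subset_leq_card hsub); by rewrite cardsU hI cards0 subn0.
  exact: leq_trans hSs hS'.
have hsum : forall S : {set 'I_n * 'I_n},
    \sum_(p : 'I_n * 'I_n) (if p \in S then dl else 0) = dl *+ #|S|.
  by move=> S; rewrite -big_mkcond sumr_const.
have hle : dl *+ #|Ss| <= dl *+ #|S'|.
  by rewrite -!(mulr_natr dl); apply: ler_wpM2l => //; rewrite ler_nat.
rewrite sumrB hsum in h1; rewrite h2 sumrB hsum.
move: h1 hle; set Z := \sum_(p : 'I_n * 'I_n) X p; lra.
Qed.

End G2.
End P2.

Theorem theorem6 (R : realFieldType) (b : nat -> R) (c gamma c0 : R)
  (hb : forall k : nat, (0 < k)%N -> 0 < b k.+1 /\ b k.+1 < b k)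
  (hg0 : 0 <= gamma) (hg1 : gamma < 1) :
  (* 1. *)
  (b 1%N < c ->
     forall n (g : rel 'I_n), visited b c gamma c0 g ->
       n = 1%N /\ efficient b c g) /\
  (* 2. *)
  (b 1%N - b 2%N + gamma * b 2%N <= c -> c < b 1%N ->
   c0 < (1 - gamma) * (b 2%N - b 3%N) ->
     forall n (g : rel 'I_n), visited b c gamma c0 g ->
       pairwise_stable b c gamma g -> efficient b c g) /\
  (* 3. *)
  (c < b 1%N - b 2%N -> c0 <= (1 - gamma) * b 2%N ->
     forall n (g : rel 'I_n), visited b c gamma c0 g ->
       pairwise_stable b c gamma g -> efficient b c g).
Proof.
have hb2 : 0 < b 2%N by apply: (b_pos hb).
split; last split.
- move=> hc n g hv.
  have key : n = 1%N /\ (forall u v, g u v = false).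
    elim: hv => [|m g0 t _ [hm hg] _ [_ hpos _] | m g0 g1 _ [hm hg] hnps _].
    + by [].
    + exfalso; subst m.
      have hst : isstar g0 t.
        by move=> u v; rewrite hg (ord1 u) (ord1 v) eqxx.
      move: hpos; rewrite (entrant_ctr b c gamma c0 hst) big_ord1 (ord1 t) eqxx.
      by rewrite hg; lra.
    + exfalso; subst m; apply: hnps; split; first by move=> i j; rewrite hg.
      by move=> i j; rewrite (ord1 i) (ord1 j) eqxx.
  case: key => hn hg; split => //; subst n.
  move=> g' [_ hirr]; rewrite !welfareE; apply: ler_sum => j _; apply: ler_sum => w _.
  by rewrite /phi (ord1 w) (ord1 j) hirr hg !(sec_self b).
- move=> H1 H2 H3 n g hv _.
  have hbc : b 1%N - c <= (1 - gamma) * b 2%N by rewrite mulrBl mul1r; lra.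
  have hbc2 : b 1%N - c <= b 2%N by have := mulr_ge0 hg0 (ltW hb2); lra.
  have : exists ctr, isstar g ctr.
    elim: hv => [|m g0 t _ [ctr hst] _ [hacc hpos hmax] | m g0 g1 _ [ctr hst] hnps _].
    + by exists ord0 => u v; rewrite (ord1 u) (ord1 v) eqxx.
    + suff hst' : isstar g0 t by exists (widen_ord (leqnSn m) t); exact: ext_star.
      case: (eqVneq t ctr) => [->//|htc].
      case: (ltnP 2 m) => hm.
        exfalso; have h1 := hmax ctr (star_accepts hb hg0 hst H2).
        have h2 := entry_cmp c hb hg1 hst htc (exists_third ctr t hm) H3.
        by move: (lt_le_trans h2 h1); rewrite ltxx.
      have hm2 : m = 2%N.
        apply/eqP; rewrite eqn_leq hm /=; rewrite ltnNge; apply/negP => hm1.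
        move: htc; have := ltn_ord t; have := ltn_ord ctr => h1 h2.
        have -> : t = ctr by apply: ord_inj; lia.
        by rewrite eqxx.
      by subst m; exact: star2_swap hst htc.
    + exfalso; apply: hnps; apply: (star_ps hb hg0 hg1 hst); [exact: hbc | exact: H2].
  by case=> ctr hst; apply: (star_efficient hb hst); [exact: H2 | exact: hbc2].
- move=> H1 H2 n g hv hps.
  have hbc : b 2%N < b 1%N - c by lra.
  apply: (complete_efficient hb hbc); exact: (ps_complete hb hg0 hg1 hbc hps).
Qed.
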